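(* Let $F\in\mathbb{Z}[x_0,\ldots,x_n]$ be a form with $\mathrm{o}(F)<n+1$. Then for all except finitely many primes $p$, $\mathrm{o}(F_p)<n+1$.
   Context: $F_p$ denotes the reduction of $F$ modulo $p$. The order of a form over a field $K$ is the smallest integer $m$ such that the form is equivalent, via an invertible linear change of variables over $K$, to a form explicitly involving only $m$ variables; $\mathrm{o}(F)$ is the order over $\mathbb{Q}$ and $\mathrm{o}(F_p)$ the order over $\mathbb{F}_p$. *)

(* Defs.v *)
From HB Require Import structures.
From mathcomp Require Import all_boot all_order all_algebra.
From mathcomp.multinomials Require Import mpoly.
From Stdlib Require Import ClassicalEpsilon.

Set Implicit Arguments.
Unset Strict Implicit.
Unset Printing Implicit Defensive.

Import GRing.Theory.
Local Open Scope ring_scope.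

Definition lin_change (K : fieldType) (k : nat) (A : 'M[K]_k)
  (P : {mpoly K[k]}) : {mpoly K[k]} :=
  P \mPo [tuple \sum_(j < k) (A i j)%:MP * 'X_j | i < k].

Definition involves_only (K : fieldType) (k : nat) (P : {mpoly K[k]})
  (S : {set 'I_k}) : Prop :=
  forall m, m \in msupp P -> forall i : 'I_k, (m i != 0)%N -> i \in S.

Definition order_at_most (K : fieldType) (k : nat) (P : {mpoly K[k]})
  (m : nat) : Prop :=
  exists A : 'M[K]_k, A \in unitmx /\
    exists S : {set 'I_k}, #|S| = m /\ involves_only (lin_change A P) S.

(* Boolean version (via classical logic), needed to take a minimum. *)
Definition order_at_mostb (K : fieldType) (k : nat) (P : {mpoly K[k]})
  (m : nat) : bool :=
  if excluded_middle_informative (order_at_most P m) then true else false.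

Lemma order_at_mostbP (K : fieldType) (k : nat) (P : {mpoly K[k]}) m :
  reflect (order_at_most P m) (order_at_mostb P m).
Proof.
by rewrite /order_at_mostb; case: excluded_middle_informative => h; constructor.
Qed.

Lemma order_at_most_exists (K : fieldType) (k : nat) (P : {mpoly K[k]}) :
  exists m, order_at_mostb P m.
Proof.
exists k; apply/order_at_mostbP.
exists 1%:M; split; first exact: unitmx1.
by exists setT; split; [rewrite cardsT card_ord | move=> m _ i _; rewrite inE].
Qed.

Definition form_order (K : fieldType) (k : nat) (P : {mpoly K[k]}) : nat :=
  ex_minn (order_at_most_exists P).

Definition reduce_mod (p : nat) (k : nat) (F : {mpoly int[k]}) : {mpoly 'F_p[k]} :=
  map_mpoly (fun z : int => z%:~R) F.

Definition to_rat (k : nat) (F : {mpoly int[k]}) : {mpoly rat[k]} :=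
  map_mpoly (fun z : int => z%:~R) F.

(* Main.v *)
Require Import Defs.
From HB Require Import structures.
From mathcomp Require Import all_boot all_order all_algebra.
From mathcomp.multinomials Require Import mpoly.
Set Implicit Arguments. Unset Strict Implicit. Unset Printing Implicit Defensive.
Import GRing.Theory Num.Theory.
Local Open Scope ring_scope.

Lemma map_comp_gen (n k : nat) (R S : comNzRingType) (f : {rmorphism R -> S})
  (lq : n.-tuple {mpoly R[k]}) (p : {mpoly R[n]}) :
  map_mpoly f (p \mPo lq) =
  (map_mpoly f p) \mPo [tuple map_mpoly f (tnth lq i) | i < n].
Proof.
set w := (msize p + msize (map_mpoly f p))%N.
rewrite (comp_mpolywE (w := w) _ (leq_addl _ _)) (comp_mpolywE (w := w) _ (leq_addr _ _)) raddf_sum /=.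
apply: eq_bigr => m _; rewrite map_mpolyZ mcoeff_map_mpoly rmorph_prod /=.
congr (_ *: _); apply: eq_bigr => i _; by rewrite rmorphXn tnth_mktuple.
Qed.

Definition linZ (k : nat) (B : 'M[int]_k) (P : {mpoly int[k]}) : {mpoly int[k]} :=
  P \mPo [tuple \sum_(j < k) (B i j)%:MP * 'X_j | i < k].

Lemma map_linZ (K : fieldType) (k : nat) (B : 'M[int]_k) (P : {mpoly int[k]}) :
  map_mpoly (fun z : int => z%:~R) (linZ B P) =
  lin_change (map_mx (fun z : int => (z%:~R : K)) B) (map_mpoly (fun z : int => z%:~R) P).
Proof.
rewrite /linZ /lin_change (map_comp_gen (intr : {rmorphism int -> K})).
congr comp_mpoly; apply: eq_from_tnth => i; rewrite !tnth_mktuple raddf_sum /=.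
apply: eq_bigr => j _; rewrite rmorphM /= map_mpolyC mxE; congr (_ * _).
by rewrite /map_mpoly mmapX mmap1U.
Qed.
Lemma lin_change_scale (K : fieldType) (k d : nat) (A : 'M[K]_k) (c : K)
  (P : {mpoly K[k]}) :
  {in msupp P, forall m, mdeg m = d} ->
  lin_change (c *: A) P = c ^+ d *: lin_change A P.
Proof.
move=> hd; rewrite /lin_change !comp_mpolyE scaler_sumr big_seq [RHS]big_seq.
apply: eq_bigr => m hm; rewrite scalerA mulrC -scalerA; congr (_ *: _).
rewrite -(hd m hm) mdegE -prodrXr -scaler_prod; apply: eq_bigr => i _.
rewrite !tnth_mktuple -exprZn scaler_sumr; congr (_ ^+ _); apply: eq_bigr => j _.
by rewrite mxE -!mul_mpolyC mulrA -mpolyCM.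
Qed.

Lemma involves_scale (K : fieldType) (k : nat) (P : {mpoly K[k]}) c S :
  involves_only P S -> involves_only (c *: P) S.
Proof. by move=> h m /msuppZ_le; apply: h. Qed.

Lemma involves_reduce (k p : nat) (H : {mpoly int[k]}) S :
  involves_only (to_rat H) S -> involves_only (reduce_mod p H) S.
Proof.
move=> h m hm; apply: h; move: hm; rewrite !mcoeff_msupp.
rewrite !(mcoeff_map_mpoly (intr : {rmorphism int -> _})) /=.
apply: contraNN; rewrite intr_eq0 => /eqP ->; by rewrite mulr0z.
Qed.
Lemma clear_den (k : nat) (A : 'M[rat]_k) :
  exists B : 'M[int]_k, exists D : int, D != 0 /\
    map_mx (fun z : int => (z%:~R : rat)) B = D%:~R *: A.
Proof.
pose D : int := \prod_(u : 'I_k * 'I_k) denq (A u.1 u.2).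
exists (\matrix_(i, j) (numq (A i j) * \prod_(u | u != (i, j)) denq (A u.1 u.2))).
exists D; split.
  by rewrite prodf_seq_neq0; apply/allP => u _; rewrite denq_neq0.
apply/matrixP => i j; have -> : D = denq (A i j) * \prod_(u | u != (i,j)) denq (A u.1 u.2) by rewrite /D (bigD1 (i,j)).
rewrite mxE [in LHS]mxE intrM numqE -mulrA -intrM mxE mulrC; reflexivity.
Qed.

Lemma Fp_int_neq0 (p : nat) (z : int) : prime p -> (`|z| < p)%N -> z != 0 ->
  (z%:~R : 'F_p) != 0.
Proof.
move=> pp lt nz.
have h : forall n : nat, (0 < n < p)%N -> (n%:R : 'F_p) != 0.
  move=> n /andP[n0 np]; rewrite -(dvdn_pcharf (pchar_Fp pp)).
  by apply/negP => /(dvdn_leq n0); rewrite leqNgt np.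
case: z lt nz => n /= lt nz.
  by rewrite -pmulrn; apply: h; rewrite lt andbT lt0n; apply: contraNneq nz => ->.
by rewrite NegzE mulrNz oppr_eq0 -pmulrn; apply: h.
Qed.

Theorem corollary3p10 (n : nat) (F : {mpoly int[n.+1]}) :
  (exists d : nat, F \is d.-homog) ->
  (form_order (to_rat F) < n.+1)%N ->
  exists s : seq nat, forall p : nat, prime p -> p \notin s ->
    (form_order (reduce_mod p F) < n.+1)%N.
Proof.
case=> d hd.
rewrite {1}/form_order; case: ex_minnP => m /order_at_mostbP [A [uA [S [cS invS]]]] _ hm.
have [B [D [D0 eB]]] := clear_den A.
have hdet : \det (map_mx (fun z : int => (z%:~R : rat)) B) = (\det B)%:~R :=
  det_map_mx (intr : {rmorphism int -> rat}) B.
have z0 : \det B != 0.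
  apply/negP => /eqP z0; move: hdet; rewrite z0 eB detZ mulr0z => /eqP.
  apply/negP; apply: mulf_neq0; first by rewrite expf_neq0 // intr_eq0.
  by move: uA; rewrite unitmxE unitfE.
exists (iota 0 `|\det B|.+1) => p pp pns.
have lt : (`|\det B| < p)%N by move: pns; rewrite mem_iota /= add0n ltnS -ltnNge.
rewrite /form_order; case: ex_minnP => m' _ hmin'.
apply: leq_ltn_trans (hmin' m _) hm.
apply/order_at_mostbP; exists (map_mx (fun z : int => z%:~R) B); split.
  rewrite unitmxE unitfE.
  have -> : \det (map_mx (fun z : int => (z%:~R : 'F_p)) B) = (\det B)%:~R :=
    det_map_mx (intr : {rmorphism int -> 'F_p}) B.
  exact: Fp_int_neq0.
exists S; split=> //.
rewrite -map_linZ; apply: involves_reduce.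
rewrite /to_rat map_linZ eB (@lin_change_scale _ _ d); first exact: involves_scale.
move=> mm; rewrite mcoeff_msupp (mcoeff_map_mpoly (intr : {rmorphism int -> rat})) /=.
move=> h; apply: (dhomog_mf hd); rewrite mcoeff_msupp.
by apply: contraNN h => /eqP ->; rewrite mulr0z.
Qed.
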